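(* Let $L_1,\dots,L_r$ be linear functionals on complex Laurent polynomials satisfying $L_j[w^k]=L_j[w^{-k}]$ for all $k\in\mathbb N$ and all $j$. Then for $(\bm n;\bm m)\in\mathfrak C_{2r}$, $(\bm n;\bm m)$ is normal if and only if $(\bm m;\bm n)$ is normal, and in that case $\Phi^*_{\bm n;\bm m}(z)=\Phi_{\bm m;\bm n}(1/z)$, $\bm\Xi^*_{\bm n;\bm m}(z)=\bm\Xi_{\bm m;\bm n}(1/z)$, $\alpha_{\bm n;\bm m}=\beta_{\bm m;\bm n}$, $\rho_{\bm n;\bm m,j}=\sigma_{\bm m;\bm n,j}$ (whenever these are defined), and $\gamma^{k\ell}_{\bm n;\bm m}=\eta^{k\ell}_{\bm m;\bm n}$ (whenever these are defined).
   Context: Fix $r\ge1$; $\mathbb N=\{0,1,2,\dots\}$; $\bm e_j$ is the $j$-th standard unit vector of $\mathbb Z^r$; for $\bm v\in\mathbb Z^r$, $|\bm v|=v_1+\dots+v_r$ (signed). Let $c_{k,j}=L_j[w^{-k}]$. $\mathfrak C_{2r}=\{(\bm n;\bm m)\in\mathbb Z^r\times\mathbb Z^r:n_j+m_j\ge0\ \forall j\}$. For $(\bm n;\bm m)\in\mathfrak C_{2r}$, $\bm n\ne-\bm m$, $T_{\bm n;\bm m}$ is the square matrix of size $|\bm n|+|\bm m|$ with rows indexed by $(j,k)$, $1\le j\le r$, $-m_j\le k\le n_j-1$ (ordered by $j$, then increasing $k$), columns indexed by $i=-|\bm m|,\dots,|\bm n|-1$, entries $c_{k-i,j}$; $T_{\bm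 n;-\bm n}:=1$; normal means $\det T_{\bm n;\bm m}\ne0$. For normal $(\bm n;\bm m)$, $\bm n\ne-\bm m$: $\Phi_{\bm n;\bm m}$ is the unique Laurent polynomial in $\operatorname{span}\{z^k\}_{k=-|\bm m|}^{|\bm n|}$ with $z^{|\bm n|}$-coefficient $1$ and $L_j[\Phi_{\bm n;\bm m}(w)w^{-k}]=0$ for $-m_j\le k\le n_j-1$, all $j$; $\Phi^*_{\bm n;\bm m}$ is the unique one in that span with $z^{-|\bm m|}$-coefficient $1$ and $L_j[\Phi^*_{\bm n;\bm m}(w)w^{-k}]=0$ for $-m_j+1\le k\le n_j$; $\bm\Xi_{\bm n;\bm m}=(\Xi_{\bm n;\bm m,j})_{j=1}^r$ is the unique vector with $\Xi_{\bm n;\bm m,j}\in\operatorname{span}\{z^k\}_{k=-n_j}^{m_j-1}$, $\sum_jL_j[\Xi_{\bm n;\bm m,j}(w)w^{-k}]=0$ for $-|\bm n|+1\le k\le|\bm m|-1$ and $=1$ for $k=-|\bm n|$; $\bm\Xi^*_{\bm n;\bm m}$ is the unique vector with $\Xi^*_{\bm n;\bm m,j}\in\operatorname{span}\{z^k\}_{k=-n_j+1}^{m_j}$, the same vanishing conditions, and $=1$ for $k=|\bm m|$. For $\bm n=-\bm m$: $\Phi=\Phi^*=1$, $\bm\Xi=\bm\Xi^*=\bm0$. $\alpha_{\bm n;\bm m}$ := $z^{-|\bm m|}$-coefficient of $\Phi_{\bm n;\bm m}$; $\beta_{\bm n;\bm m}$ := $z^{|\bm n|}$-coefficient of $\Phi^*_{\bm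 n;\bm m}$. $\rho_{\bm n;\bm m,j}=L_j[\Phi_{\bm n;\bm m}(w)w^{-n_j}]/L_j[\Phi_{\bm n-\bm e_j;\bm m}(w)w^{-n_j+1}]$ (defined when $(\bm n;\bm m),(\bm n-\bm e_j;\bm m)\in\mathfrak C_{2r}$ are normal) and $\sigma_{\bm n;\bm m,j}=L_j[\Phi^*_{\bm n;\bm m}(w)w^{m_j}]/L_j[\Phi^*_{\bm n;\bm m-\bm e_j}(w)w^{m_j-1}]$ (defined when $(\bm n;\bm m),(\bm n;\bm m-\bm e_j)\in\mathfrak C_{2r}$ are normal). For $k\ne\ell$: $\gamma^{k\ell}_{\bm n;\bm m}=L_\ell[\Phi_{\bm n+\bm e_k;\bm m}(w)w^{-n_\ell}]/L_\ell[\Phi_{\bm n;\bm m}(w)w^{-n_\ell}]$ (defined when $(\bm n;\bm m),(\bm n+\bm e_k;\bm m),(\bm n+\bm e_\ell;\bm m)$ are normal) and $\eta^{k\ell}_{\bm n;\bm m}=L_\ell[\Phi^*_{\bm n;\bm m+\bm e_k}(w)w^{m_\ell}]/L_\ell[\Phi^*_{\bm n;\bm m}(w)w^{m_\ell}]$ (defined when $(\bm n;\bm m),(\bm n;\bm m+\bm e_k),(\bm n;\bm m+\bm e_\ell)$ are normal). *)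

(* Defs.v *)
From HB Require Import structures.
From mathcomp Require Import all_boot all_order all_algebra.
From mathcomp Require Import complex.
From mathcomp Require Import reals.
From Stdlib Require Import ClassicalEpsilon.
Set Implicit Arguments.
Unset Strict Implicit.
Unset Printing Implicit Defensive.
Import Order.TTheory GRing.Theory Num.Theory.
Local Open Scope ring_scope.

Section Defs.
Variable R : realType.
Variable r : nat.
(* L j i = L_j[w^i]: a linear functional on complex Laurent polynomials is
   determined by (and determines) its values on the monomial basis w^i. *)
Variable L : 'I_r -> int -> R[i].

Definition ent (v : 'rV[int]_r) (j : 'I_r) : int := v ord0 j.
Definition vabs (v : 'rV[int]_r) : int := \sum_(j < r) ent v j.
Definition evec (j : 'I_r) : 'rV[int]_r := delta_mx ord0 j.

Definition inC2r (n m : 'rV[int]_r) : Prop := forall j, 0 <= ent n j + ent m j.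

Definition irange (a b : int) : seq int :=
  if b < a then [::] else [seq a + (t%:Z) | t <- iota 0 (absz (b - a)).+1].

(* L applied to P(w) w^{-k}, for P in span{z^i}_{i=a..b} (coefficients P i) *)
Definition Lapp (j : 'I_r) (a b : int) (P : int -> R[i]) (k : int) : R[i] :=
  \sum_(i <- irange a b) P i * L j (i - k).

Definition cmom (k : int) (j : 'I_r) : R[i] := L j (- k).

Definition Trows (n m : 'rV[int]_r) : seq ('I_r * int) :=
  flatten [seq [seq (j, k) | k <- irange (- ent m j) (ent n j - 1)] | j <- enum 'I_r].

Definition Tsize (n m : 'rV[int]_r) : nat := absz (vabs n + vabs m).

(* T_{n;m}: column b corresponds to i = -|m| + b, entries c_{k-i,j} *)
Definition Tmat (n m : 'rV[int]_r) : 'M[R[i]]_(Tsize n m) :=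
  \matrix_(a < Tsize n m, b < Tsize n m)
    match onth (Trows n m) a with
    | Some (j, k) => cmom (k - (- vabs m + b%:Z)) j
    | None => 0
    end.

Definition normal (n m : 'rV[int]_r) : Prop :=
  if n == - m then True else \det (Tmat n m) != 0.

Definition supported (a b : int) (P : int -> R[i]) : Prop :=
  forall k, (k < a \/ b < k) -> P k = 0.

Definition is_Phi (n m : 'rV[int]_r) (P : int -> R[i]) : Prop :=
  [/\ supported (- vabs m) (vabs n) P, P (vabs n) = 1 &
      forall j k, - ent m j <= k <= ent n j - 1 ->
        Lapp j (- vabs m) (vabs n) P k = 0].

Definition is_PhiStar (n m : 'rV[int]_r) (P : int -> R[i]) : Prop :=
  [/\ supported (- vabs m) (vabs n) P, P (- vabs m) = 1 &
      forall j k, - ent m j + 1 <= k <= ent n j ->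
        Lapp j (- vabs m) (vabs n) P k = 0].

Definition is_Xi (n m : 'rV[int]_r) (X : 'I_r -> int -> R[i]) : Prop :=
  [/\ forall j, supported (- ent n j) (ent m j - 1) (X j),
      forall k, - vabs n + 1 <= k <= vabs m - 1 ->
        \sum_(j < r) Lapp j (- ent n j) (ent m j - 1) (X j) k = 0 &
      \sum_(j < r) Lapp j (- ent n j) (ent m j - 1) (X j) (- vabs n) = 1].

Definition is_XiStar (n m : 'rV[int]_r) (X : 'I_r -> int -> R[i]) : Prop :=
  [/\ forall j, supported (- ent n j + 1) (ent m j) (X j),
      forall k, - vabs n + 1 <= k <= vabs m - 1 ->
        \sum_(j < r) Lapp j (- ent n j + 1) (ent m j) (X j) k = 0 &
      \sum_(j < r) Lapp j (- ent n j + 1) (ent m j) (X j) (vabs m) = 1].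

Definition one_lp : int -> R[i] := fun k => (k == 0)%:R.

(* The unique objects (uniqueness holds for normal indices); chosen by
   Hilbert's epsilon, with the paper's convention for n = -m. *)
Definition Phi (n m : 'rV[int]_r) : int -> R[i] :=
  if n == - m then one_lp else epsilon (inhabits one_lp) (is_Phi n m).
Definition PhiStar (n m : 'rV[int]_r) : int -> R[i] :=
  if n == - m then one_lp else epsilon (inhabits one_lp) (is_PhiStar n m).
Definition Xi (n m : 'rV[int]_r) : 'I_r -> int -> R[i] :=
  if n == - m then (fun _ _ => 0)
  else epsilon (inhabits (fun _ _ => 0)) (is_Xi n m).
Definition XiStar (n m : 'rV[int]_r) : 'I_r -> int -> R[i] :=
  if n == - m then (fun _ _ => 0)
  else epsilon (inhabits (fun _ _ => 0)) (is_XiStar n m).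

Definition plo (n m : 'rV[int]_r) : int := if n == - m then 0 else - vabs m.
Definition phi_ (n m : 'rV[int]_r) : int := if n == - m then 0 else vabs n.

Definition LPhi (j : 'I_r) (n m : 'rV[int]_r) (k : int) : R[i] :=
  Lapp j (plo n m) (phi_ n m) (Phi n m) k.
Definition LPhiStar (j : 'I_r) (n m : 'rV[int]_r) (k : int) : R[i] :=
  Lapp j (plo n m) (phi_ n m) (PhiStar n m) k.

Definition alpha (n m : 'rV[int]_r) : R[i] := Phi n m (- vabs m).
Definition beta (n m : 'rV[int]_r) : R[i] := PhiStar n m (vabs n).

Definition rho (n m : 'rV[int]_r) (j : 'I_r) : R[i] :=
  LPhi j n m (ent n j) / LPhi j (n - evec j) m (ent n j - 1).
Definition sigma (n m : 'rV[int]_r) (j : 'I_r) : R[i] :=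
  LPhiStar j n m (- ent m j) / LPhiStar j n (m - evec j) (- ent m j + 1).
Definition gammaR (k l : 'I_r) (n m : 'rV[int]_r) : R[i] :=
  LPhi l (n + evec k) m (ent n l) / LPhi l n m (ent n l).
Definition etaR (k l : 'I_r) (n m : 'rV[int]_r) : R[i] :=
  LPhiStar l n (m + evec k) (- ent m l) / LPhiStar l n m (- ent m l).

End Defs.

(* Main.v *)
Require Import Defs.
From HB Require Import structures.
From mathcomp Require Import all_boot all_order all_algebra.
From mathcomp Require Import complex.
From mathcomp Require Import reals.
From mathcomp Require Import zify.
From Stdlib Require Import ClassicalEpsilon.
Import Order.TTheory GRing.Theory Num.Theory.
Local Open Scope ring_scope.
Set Implicit Arguments.
Unset Strict Implicit.

Lemma mem_irange (a b k : int) : (k \in irange a b) = (a <= k <= b).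
Proof.
rewrite /irange; case: ifP => hab.
  by rewrite in_nil; apply/esym/negbTE; apply/negP => /andP[]; lia.
apply/mapP/idP.
  case=> t; rewrite mem_iota => /andP[_ ht] ->; apply/andP; split; lia.
move=> /andP[h1 h2]; exists (absz (k - a)); first by rewrite mem_iota; lia.
lia.
Qed.

Lemma uniq_irange (a b : int) : uniq (irange a b).
Proof.
rewrite /irange; case: ifP => // _.
rewrite map_inj_uniq ?iota_uniq // => x y /= /addrI [] //.
Qed.

Lemma size_irange (a b : int) : a <= b + 1 -> size (irange a b) = absz (b - a + 1).
Proof.
move=> h; rewrite /irange; case: ifP => hab /=; first by lia.
rewrite size_map size_iota; lia.
Qed.

Lemma big_irange (V : nmodType) (F : int -> V) (a : int) (M : nat) :
  \sum_(i <- irange a (a + M%:Z)) F i = \sum_(t < M.+1) F (a + t%:Z).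
Proof.
rewrite /irange ifF; last by lia.
rewrite big_map -(big_mkord xpredT (fun t => F (a + t%:Z))) /index_iota subn0.
congr (bigop _ _ _); congr iota; lia.
Qed.
Section S.
Variable R : realType.
Variable r : nat.
Variable L : 'I_r -> int -> R[i].
Hypothesis Lsym : forall j z, L j z = L j (- z).

Lemma mem_Trows (n m : 'rV[int]_r) j k :
  ((j, k) \in Trows n m) = (- ent m j <= k <= ent n j - 1).
Proof.
rewrite /Trows.
change (flatten _) with
  [seq (j0, k0) | j0 <- enum 'I_r, k0 <- irange (- ent m j0) (ent n j0 - 1)].
apply/allpairsPdep/idP.
  by case=> j' [k'] [_ hk [-> ->]]; rewrite -mem_irange.
by move=> h; exists j, k; rewrite mem_enum mem_irange.
Qed.

Lemma uniq_Trows (n m : 'rV[int]_r) : uniq (Trows n m).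
Proof.
rewrite /Trows.
change (flatten _) with
  [seq (j0, k0) | j0 <- enum 'I_r, k0 <- irange (- ent m j0) (ent n j0 - 1)].
apply: allpairs_uniq_dep; first exact: enum_uniq.
  by move=> x _; apply: uniq_irange.
move=> [x1 y1] [x2 y2] _ _ /=.
move=> h; have e1 : x1 = x2 by case: h.
have e2 : y1 = y2 by case: h.
by rewrite e1 e2.
Qed.

Lemma TsizeZ (n m : 'rV[int]_r) : inC2r n m -> (Tsize n m)%:Z = vabs n + vabs m.
Proof.
move=> hC; rewrite /Tsize.
have h : 0 <= vabs n + vabs m.
  by rewrite /vabs -big_split; apply: sumr_ge0 => j _; exact: hC.
lia.
Qed.

Lemma size_Trows (n m : 'rV[int]_r) : inC2r n m -> size (Trows n m) = Tsize n m.
Proof.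
move=> hC; apply/eqP; rewrite -eqz_nat TsizeZ // /Trows.
change (flatten _) with
  [seq (j0, k0) | j0 <- enum 'I_r, k0 <- irange (- ent m j0) (ent n j0 - 1)].
rewrite size_allpairs_dep sumnE big_map -natz natr_sum big_enum /=.
rewrite /vabs -big_split /=; apply/eqP/eq_bigr => j _.
have hj := hC j; rewrite size_irange; last by lia.
rewrite natz; lia.
Qed.

Lemma Tsize_pos (n m : 'rV[int]_r) : inC2r n m -> n != - m -> (0 < Tsize n m)%N.
Proof.
move=> hC; apply: contraR; rewrite -eqn0Ngt => /eqP h0.
have : vabs n + vabs m = 0 by rewrite -TsizeZ // h0.
rewrite /vabs -big_split /= => /eqP; rewrite psumr_eq0 /=; last by move=> j _; apply: hC.
move=> /allP h; apply/eqP/rowP => j; rewrite mxE.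
have := h j (mem_index_enum j); rewrite /ent => /eqP; move=> e; apply/eqP; rewrite -addr_eq0; exact/eqP.
Qed.

Lemma eq_negC (n m : 'rV[int]_r) : (n == - m) = (m == - n).
Proof. by rewrite eq_sym eqr_oppLR. Qed.

Lemma inC2rC (n m : 'rV[int]_r) : inC2r n m -> inC2r m n.
Proof. by move=> h j; rewrite addrC. Qed.

Lemma LappE j a (M : nat) P k :
  Lapp L j a (a + M%:Z) P k = \sum_(t < M.+1) P (a + t%:Z) * L j (a + t%:Z - k).
Proof. by rewrite /Lapp big_irange. Qed.

Lemma LappR j a b c P Q k : (forall i, Q i = P (c - i)) ->
  Lapp L j a b P k = Lapp L j (c - b) (c - a) Q (c - k).
Proof.
move=> hQ.
have hp : perm_eq (irange (c - b) (c - a)) [seq c - i | i <- irange a b].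
  apply: uniq_perm; first exact: uniq_irange.
    by rewrite map_inj_uniq ?uniq_irange // => x y /= h; lia.
  move=> x; apply/idP/mapP.
    by rewrite mem_irange => h; exists (c - x); [rewrite mem_irange|]; lia.
  by case=> y; rewrite mem_irange => hy ->; rewrite mem_irange; lia.
rewrite /Lapp (perm_big _ hp) big_map; apply: eq_bigr => i _.
rewrite hQ (_ : c - (c - i) = i); last by lia.
by rewrite Lsym; congr (_ * L j _); lia.
Qed.

End S.
Section S3.
Variable R : realType.
Variable r : nat.
Variable L : 'I_r -> int -> R[i].
Hypothesis Lsym : forall j z, L j z = L j (- z).
Variable j0 : 'I_r.
Let x0 : 'I_r * int := (j0, 0).

Lemma onth_nthE {T : Type} (y0 : T) s i : (i < size s)%N -> onth s i = Some (nth y0 s i).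
Proof. by move=> h; rewrite onthE (nth_map y0). Qed.

Lemma Tmat_E (n m : 'rV[int]_r) (a b : 'I_(Tsize n m)) : inC2r n m ->
  Tmat L n m a b =
  L (nth x0 (Trows n m) a).1 (- vabs m + b%:Z - (nth x0 (Trows n m) a).2).
Proof.
move=> hC; rewrite mxE (onth_nthE x0); last by rewrite size_Trows.
case: (nth x0 (Trows n m) a) => j k /=; rewrite /cmom; congr (L j _); lia.
Qed.

Lemma LappT (n m : 'rV[int]_r) D j k : inC2r n m -> n != - m ->
  Lapp L j (- vabs m) (vabs n - 1) D k =
  \sum_(b < Tsize n m) D (- vabs m + b%:Z) * L j (- vabs m + b%:Z - k).
Proof.
move=> hC hn; move: (Tsize_pos hC hn) (TsizeZ hC).
case: (Tsize n m) => // M _ hz.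
by rewrite (_ : vabs n - 1 = - vabs m + M%:Z); [rewrite LappE | lia].
Qed.

Lemma LappT1 (n m : 'rV[int]_r) D j k : inC2r n m ->
  Lapp L j (- vabs m) (vabs n) D k =
  \sum_(b < Tsize n m) D (- vabs m + b%:Z) * L j (- vabs m + b%:Z - k)
  + D (vabs n) * L j (vabs n - k).
Proof.
move=> hC; have hz := TsizeZ hC.
rewrite (_ : vabs n = - vabs m + (Tsize n m)%:Z); last by lia.
by rewrite LappE big_ord_recr.
Qed.

Lemma sum_delta N (y : 'I_N -> R[i]) (a : 'I_N) :
  \sum_(b < N) ((b : nat) == a)%:R * y b = y a.
Proof.
rewrite (bigD1 a) //= eqxx mul1r big1 ?addr0 // => b hb.
by rewrite (_ : ((b : nat) == a) = false) ?mul0r //; apply/negbTE.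
Qed.

Lemma sum_delta0 N (y : 'I_N -> R[i]) (t : nat) : (N <= t)%N ->
  \sum_(b < N) ((b : nat) == t)%:R * y b = 0.
Proof.
move=> h; rewrite big1 // => b _.
by rewrite (_ : ((b : nat) == t) = false) ?mul0r //; apply/negbTE; have := ltn_ord b; lia.
Qed.

Lemma eqz_shift (lo i : int) (b : nat) :
  (i == lo + b%:Z) = ((0 <= i - lo) && ((b : nat) == absz (i - lo))).
Proof. apply/eqP/andP; [move=> ->; split; lia | case=> h1 /eqP h2; lia]. Qed.

Lemma idx_lt (n m : 'rV[int]_r) j k : inC2r n m ->
  - ent m j <= k <= ent n j - 1 -> (index (j, k) (Trows n m) < Tsize n m)%N.
Proof. by move=> hC h; rewrite -size_Trows // index_mem mem_Trows. Qed.

Lemma nth_Trows (n m : 'rV[int]_r) (a : nat) : inC2r n m -> (a < Tsize n m)%N ->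
  - ent m (nth x0 (Trows n m) a).1 <= (nth x0 (Trows n m) a).2
    <= ent n (nth x0 (Trows n m) a).1 - 1.
Proof.
move=> hC ha; have hm : nth x0 (Trows n m) a \in Trows n m by rewrite mem_nth // size_Trows.
by move: hm; case: (nth x0 (Trows n m) a) => j k; rewrite mem_Trows.
Qed.


Lemma unitT (n m : 'rV[int]_r) : n != - m -> normal L n m -> (Tmat L n m)^T \in unitmx.
Proof. by move=> hn; rewrite /normal (negbTE hn) unitmxE det_tr unitfE. Qed.

Lemma vT_E (n m : 'rV[int]_r) (v : 'rV[R[i]]_(Tsize n m)) a : inC2r n m ->
  (v *m (Tmat L n m)^T) 0 a =
  \sum_(b < Tsize n m) v 0 b * L (nth x0 (Trows n m) a).1
                         (- vabs m + b%:Z - (nth x0 (Trows n m) a).2).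
Proof.
move=> hC; rewrite mxE; apply: eq_bigr => b _; rewrite [X in _ * X]mxE Tmat_E //.
Qed.

Lemma ker_normal (n m : 'rV[int]_r) : inC2r n m -> n != - m -> normal L n m ->
  forall D : int -> R[i],
  (forall j k, - ent m j <= k <= ent n j - 1 ->
     Lapp L j (- vabs m) (vabs n - 1) D k = 0) ->
  forall i, - vabs m <= i <= vabs n - 1 -> D i = 0.
Proof.
move=> hC hn hN D hD i hi.
have hU := unitT hn hN.
set v := \row_(b < Tsize n m) D (- vabs m + b%:Z).
have hv : v *m (Tmat L n m)^T = 0.
  apply/rowP => a; rewrite vT_E // mxE.
  have := hD _ _ (nth_Trows hC (ltn_ord a)); rewrite LappT // => H; apply: (etrans _ H).
  by apply: eq_bigr => b _; rewrite mxE.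
have hv0 : v = 0 by rewrite -(mulmxK hU v) hv mul0mx.
have hz := TsizeZ hC.
have hb : (absz (i + vabs m)%R < Tsize n m)%N by lia.
have := congr1 (fun w : 'rV[R[i]]_(Tsize n m) => w 0 (Ordinal hb)) hv0; rewrite !mxE /=.
by rewrite (_ : - vabs m + (absz (i + vabs m)%R)%:Z = i) //; lia.
Qed.

Lemma normal_ker (n m : 'rV[int]_r) : inC2r n m -> n != - m ->
  (forall D : int -> R[i],
  (forall j k, - ent m j <= k <= ent n j - 1 ->
     Lapp L j (- vabs m) (vabs n - 1) D k = 0) ->
  forall i, - vabs m <= i <= vabs n - 1 -> D i = 0) -> normal L n m.
Proof.
move=> hC hn hK; rewrite /normal (negbTE hn) -det_tr.
apply/negP => /det0P [v hv0 hv]; apply: (negP hv0); apply/eqP/rowP => b.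
set D := fun i : int => \sum_(b' < Tsize n m)
   ((b' : nat) == absz (i + vabs m)%R)%:R * (0 <= i + vabs m)%R%:R * v 0 b'.
have hDb : forall b' : 'I_(Tsize n m), D (- vabs m + b'%:Z) = v 0 b'.
  move=> b'; rewrite /D -(sum_delta (fun c => v 0 c) b'); apply: eq_bigr => c _.
  rewrite (_ : absz (- vabs m + b'%:Z + vabs m)%R = b'); last by lia.
  by rewrite (_ : (0 <= - vabs m + b'%:Z + vabs m)%R) ?mulr1 //; lia.
have hz := TsizeZ hC.
rewrite mxE -hDb; apply: hK; last by have := ltn_ord b; lia.
move=> j k hjk; rewrite LappT //.
have ha := idx_lt hC hjk.
have := congr1 (fun w : 'rV[R[i]]_(Tsize n m) => w 0 (Ordinal ha)) hv; rewrite vT_E // mxE /= nth_index ?mem_Trows //= => H; apply: etrans H.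
by apply: eq_bigr => c _; rewrite hDb.
Qed.


Lemma Lapp_sub j a b P Q k :
  Lapp L j a b (fun i => P i - Q i) k = Lapp L j a b P k - Lapp L j a b Q k.
Proof. by rewrite /Lapp -sumrB; apply: eq_bigr => i _; rewrite mulrBl. Qed.

Lemma Lapp_last (n m : 'rV[int]_r) D j k : inC2r n m -> n != - m ->
  Lapp L j (- vabs m) (vabs n) D k =
  Lapp L j (- vabs m) (vabs n - 1) D k + D (vabs n) * L j (vabs n - k).
Proof. by move=> hC hn; rewrite LappT1 // LappT. Qed.

Lemma Phi_unique (n m : 'rV[int]_r) : inC2r n m -> n != - m -> normal L n m ->
  forall P Q, is_Phi L n m P -> is_Phi L n m Q -> forall i, P i = Q i.
Proof.
move=> hC hn hN P Q [sP P1 eP] [sQ Q1 eQ] i.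
have hD := @ker_normal n m hC hn hN (fun i => P i - Q i).
have {}hD : forall i, - vabs m <= i <= vabs n - 1 -> P i - Q i = 0.
  apply: hD => j k hjk.
  have := Lapp_last (fun i => P i - Q i) j k hC hn.
  rewrite Lapp_sub eP // eQ // P1 Q1 subrr subrr mul0r addr0 => H.
  by rewrite -H.
have [hi|hi] := boolP (- vabs m <= i <= vabs n - 1).
  by apply/eqP; rewrite -subr_eq0; apply/eqP; apply: hD.
case: (eqVneq i (vabs n)) => [->|hne]; first by rewrite P1 Q1.
by rewrite sP ?sQ //; lia.
Qed.

Lemma Phi_exists (n m : 'rV[int]_r) : inC2r n m -> n != - m -> normal L n m ->
  exists P, is_Phi L n m P.
Proof.
move=> hC hn hN; have hU := unitT hn hN; have hz := TsizeZ hC.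
set c := \row_(a < Tsize n m)
   (- L (nth x0 (Trows n m) a).1 (vabs n - (nth x0 (Trows n m) a).2)).
set y := c *m invmx (Tmat L n m)^T.
have hy : y *m (Tmat L n m)^T = c by rewrite mulmxKV.
set P := fun i : int => (i == vabs n)%:R + \sum_(b' < Tsize n m)
   ((b' : nat) == absz (i + vabs m)%R)%:R * (0 <= i + vabs m)%R%:R * y 0 b'.
have hPb : forall b' : 'I_(Tsize n m), P (- vabs m + b'%:Z) = y 0 b'.
  move=> b'; rewrite /P (_ : (- vabs m + b'%:Z == vabs n) = false); last first.
    by have := ltn_ord b'; lia.
  rewrite add0r -(sum_delta (fun c => y 0 c) b'); apply: eq_bigr => c' _.
  rewrite (_ : absz (- vabs m + b'%:Z + vabs m)%R = b'); last by lia.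
  by rewrite (_ : (0 <= - vabs m + b'%:Z + vabs m)%R) ?mulr1 //; lia.
have hP1 : P (vabs n) = 1.
  rewrite /P eqxx big1 ?addr0 // => b _.
  by rewrite (_ : ((b : nat) == _) = false) ?mul0r //; have := ltn_ord b; lia.
exists P; split => //.
- move=> k hk; rewrite /P (_ : (k == vabs n) = false); last by lia.
  rewrite add0r big1 // => b _.
  have [h|h] := boolP (0 <= k + vabs m)%R; last by rewrite mulr0 mul0r.
  by rewrite (_ : ((b : nat) == _) = false) ?mul0r //; have := ltn_ord b; lia.
- move=> j k hjk; rewrite LappT1 // hP1 mul1r.
  rewrite (eq_bigr (fun b => y 0 b * L j (- vabs m + b%:Z - k))); last first.
    by move=> b _; rewrite hPb.
  have ha := idx_lt hC hjk.
  have := congr1 (fun w : 'rV[R[i]]_(Tsize n m) => w 0 (Ordinal ha)) hy.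
  rewrite vT_E // mxE /= nth_index ?mem_Trows //= => ->.
  by rewrite addNr.
Qed.


Lemma yT_E (n m : 'rV[int]_r) (y : 'rV[R[i]]_(Tsize n m)) c : inC2r n m ->
  (y *m Tmat L n m) 0 c =
  \sum_(a < Tsize n m) y 0 a * L (nth x0 (Trows n m) a).1
                         (- vabs m + c%:Z - (nth x0 (Trows n m) a).2).
Proof. by move=> hC; rewrite mxE; apply: eq_bigr => a _; rewrite Tmat_E. Qed.

Lemma XiT (n m : 'rV[int]_r) (X : 'I_r -> int -> R[i]) c : inC2r n m ->
  ((\row_(a < Tsize n m) X (nth x0 (Trows n m) a).1 (nth x0 (Trows n m) a).2)
     *m Tmat L n m) 0 c =
  \sum_(j < r) Lapp L j (- ent m j) (ent n j - 1) (X j) (- vabs m + c%:Z).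
Proof.
move=> hC; rewrite yT_E //.
transitivity (\sum_(p <- Trows n m) X p.1 p.2 * L p.1 (- vabs m + c%:Z - p.2)).
  rewrite (big_nth x0) size_Trows // big_mkord; apply: eq_bigr => a _.
  by rewrite mxE.
rewrite /Trows.
change (flatten _) with
  [seq (j1, k1) | j1 <- enum 'I_r, k1 <- irange (- ent m j1) (ent n j1 - 1)].
rewrite big_allpairs_dep /= big_enum /=; apply: eq_bigr => j _.
rewrite /Lapp; apply: eq_bigr => k _ /=; rewrite Lsym; congr (_ * L j _); lia.
Qed.

Lemma unitT' (n m : 'rV[int]_r) : n != - m -> normal L n m -> Tmat L n m \in unitmx.
Proof. by move=> hn; rewrite /normal (negbTE hn) unitmxE unitfE. Qed.

Lemma Xi_eq (n m : 'rV[int]_r) X : inC2r n m -> n != - m -> is_Xi L m n X ->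
  (\row_(a < Tsize n m) X (nth x0 (Trows n m) a).1 (nth x0 (Trows n m) a).2)
     *m Tmat L n m = \row_(c < Tsize n m) ((c : nat) == 0%N)%:R.
Proof.
move=> hC hn [sX eX X1]; have hz := TsizeZ hC.
apply/rowP => c; rewrite XiT // mxE.
have [c0|c0] := eqVneq (c : nat) 0%N.
  by rewrite c0 addr0 X1.
rewrite eX //; have := ltn_ord c; lia.
Qed.

Lemma Xi_unique (n m : 'rV[int]_r) : inC2r n m -> n != - m -> normal L n m ->
  forall X X', is_Xi L m n X -> is_Xi L m n X' -> forall j k, X j k = X' j k.
Proof.
move=> hC hn hN X X' hX hX' j k.
have hU := unitT' hn hN.
have e1 := Xi_eq hC hn hX; rewrite -(Xi_eq hC hn hX') in e1.
have {}e1 := congr1 (fun w => w *m invmx (Tmat L n m)) e1.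
rewrite /= !mulmxK // in e1.
have [h|h] := boolP ((j, k) \in Trows n m).
  have ha : (index (j, k) (Trows n m) < Tsize n m)%N by rewrite -size_Trows // index_mem.
  have := congr1 (fun w : 'rV[R[i]]_(Tsize n m) => w 0 (Ordinal ha)) e1.
  by rewrite !mxE /= nth_index.
case: hX => sX _ _; case: hX' => sX' _ _.
rewrite mem_Trows in h; rewrite sX ?sX' //; lia.
Qed.

Lemma Xi_exists (n m : 'rV[int]_r) : inC2r n m -> n != - m -> normal L n m ->
  exists X, is_Xi L m n X.
Proof.
move=> hC hn hN; have hU := unitT' hn hN; have hz := TsizeZ hC.
set e := \row_(c < Tsize n m) ((c : nat) == 0%N)%:R : 'rV[R[i]]_(Tsize n m).
set y := e *m invmx (Tmat L n m).
have hy : y *m Tmat L n m = e by rewrite mulmxKV.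
set X := fun j k => \sum_(a < Tsize n m)
   ((a : nat) == index (j, k) (Trows n m))%:R * y 0 a.
have hyX : \row_(a < Tsize n m) X (nth x0 (Trows n m) a).1 (nth x0 (Trows n m) a).2 = y.
  apply/rowP => a; rewrite mxE /X.
  have -> : ((nth x0 (Trows n m) a).1, (nth x0 (Trows n m) a).2) = nth x0 (Trows n m) a.
    by case: (nth _ _ _).
  by rewrite index_uniq ?size_Trows ?uniq_Trows // sum_delta.
exists X; split.
- move=> j k hk; rewrite /X sum_delta0 // memNindex ?size_Trows //.
  rewrite mem_Trows; lia.
- move=> k hk.
  have hc : (absz (k + vabs m)%R < Tsize n m)%N by lia.
  have := congr1 (fun w : 'rV[R[i]]_(Tsize n m) => w 0 (Ordinal hc)) hy.
  rewrite -{1}hyX XiT // mxE /=.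
  rewrite (_ : - vabs m + (absz (k + vabs m)%R)%:Z = k); last by lia.
  move=> ->; rewrite (_ : (absz (k + vabs m)%R == 0)%N = false) //; lia.
- have hc : (0 < Tsize n m)%N by apply: Tsize_pos.
  have := congr1 (fun w : 'rV[R[i]]_(Tsize n m) => w 0 (Ordinal hc)) hy.
  by rewrite -{1}hyX XiT // mxE /= addr0.
Qed.

End S3.
Section S4.
Variable R : realType.
Variable r : nat.
Variable L : 'I_r -> int -> R[i].
Hypothesis Lsym : forall j z, L j z = L j (- z).
Variable j0 : 'I_r.

Lemma LappR0 j a b P Q k : (forall i, Q i = P (- i)) ->
  Lapp L j a b P k = Lapp L j (- b) (- a) Q (- k).
Proof.
move=> hQ; rewrite (@LappR _ _ L Lsym j a b 0 P Q k) ?sub0r //.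
by move=> i; rewrite sub0r.
Qed.

Lemma PhiStar_Phi (n m : 'rV[int]_r) P Q : (forall i, Q i = P (- i)) ->
  is_PhiStar L n m P -> is_Phi L m n Q.
Proof.
move=> hQ [sP P1 eP]; split.
- by move=> k hk; rewrite hQ sP //; lia.
- by rewrite hQ P1.
- move=> j k hk; rewrite (@LappR0 j _ _ Q P k) ?opprK; last by move=> i; rewrite hQ opprK.
  by rewrite eP //; lia.
Qed.

Lemma Phi_PhiStar (n m : 'rV[int]_r) P Q : (forall i, Q i = P (- i)) ->
  is_Phi L m n Q -> is_PhiStar L n m P.
Proof.
move=> hQ [sQ Q1 eQ]; have hP : forall i, P i = Q (- i) by move=> i; rewrite hQ opprK.
split.
- by move=> k hk; rewrite hP sQ //; lia.
- by rewrite hP opprK Q1.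
- move=> j k hk; rewrite (@LappR0 j _ _ P Q k) //.
  by rewrite opprK eQ //; lia.
Qed.

Lemma XiStar_Xi (n m : 'rV[int]_r) Y X : (forall j i, X j i = Y j (- i)) ->
  is_XiStar L n m Y -> is_Xi L m n X.
Proof.
move=> hX [sY eY Y1].
have hL : forall k, \sum_(j < r) Lapp L j (- ent m j) (ent n j - 1) (X j) k =
   \sum_(j < r) Lapp L j (- ent n j + 1) (ent m j) (Y j) (- k).
  move=> k; apply: eq_bigr => j _.
  rewrite [RHS](@LappR0 j _ _ (Y j) (X j) (- k)) // opprK.
  by rewrite (_ : - (- ent n j + 1) = ent n j - 1) //; lia.
split.
- by move=> j k hk; rewrite hX sY //; lia.
- by move=> k hk; rewrite hL eY //; lia.
- by rewrite hL opprK.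
Qed.

Lemma Xi_XiStar (n m : 'rV[int]_r) Y X : (forall j i, X j i = Y j (- i)) ->
  is_Xi L m n X -> is_XiStar L n m Y.
Proof.
move=> hX [sX eX X1]; have hY : forall j i, Y j i = X j (- i).
  by move=> j i; rewrite hX opprK.
have hL : forall k, \sum_(j < r) Lapp L j (- ent n j + 1) (ent m j) (Y j) k =
   \sum_(j < r) Lapp L j (- ent m j) (ent n j - 1) (X j) (- k).
  move=> k; apply: eq_bigr => j _.
  rewrite (@LappR0 j _ _ (Y j) (X j) k) //.
  by rewrite (_ : - (- ent n j + 1) = ent n j - 1) //; lia.
split.
- by move=> j k hk; rewrite hY sX //; lia.
- by move=> k hk; rewrite hL eX //; lia.
- by rewrite hL.
Qed.

Lemma normal_sym (n m : 'rV[int]_r) : inC2r n m -> normal L n m -> normal L m n.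
Proof.
move=> hC hN; have [e|hn] := eqVneq n (- m).
  by rewrite /normal -eq_negC e eqxx.
have hn' : m != - n by rewrite -eq_negC.
apply: (normal_ker j0 (inC2rC hC) hn') => D hD i hi.
set D' := fun i => D (-1 - i).
have := ker_normal j0 hC hn hN (D := D') _ (i := -1 - i).
rewrite /D' (_ : -1 - (-1 - i) = i); last by lia.
apply; last by lia.
move=> j k hk.
rewrite (@LappR _ _ L Lsym j _ _ (-1) D' D k); last by move=> z; rewrite /D' (_ : -1 - (-1 - z) = z) //; lia.
rewrite (_ : -1 - (vabs n - 1) = - vabs n); last by lia.
rewrite (_ : -1 - - vabs m = vabs m - 1); last by lia.
by apply: hD; lia.
Qed.

Lemma main_refl (n m : 'rV[int]_r) : inC2r n m -> normal L n m ->
  (forall k, PhiStar L n m k = Phi L m n (- k)) /\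
  (forall j k, XiStar L n m j k = Xi L m n j (- k)).
Proof.
move=> hC hN; have [e|hn] := boolP (n == - m).
  have e' : m == - n by rewrite -eq_negC.
  rewrite /PhiStar /Phi /XiStar /Xi e e'; split => // k.
  by rewrite /one_lp oppr_eq0.
have hn' : m != - n by rewrite -eq_negC.
have hN' := normal_sym hC hN.
split.
  have [Q hQ] := Phi_exists j0 (inC2rC hC) hn' hN'.
  have hPS : is_PhiStar L n m (PhiStar L n m).
    rewrite /PhiStar (negbTE hn); apply: epsilon_spec.
    by exists (fun i => Q (- i)); apply: (Phi_PhiStar (Q := Q)) => // i; rewrite opprK.
  have hPh : is_Phi L m n (Phi L m n).
    by rewrite /Phi (negbTE hn'); apply: epsilon_spec; exists Q.
  have h1 := PhiStar_Phi (Q := fun i => PhiStar L n m (- i)) (fun i => erefl) hPS.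
  move=> k; rewrite -(Phi_unique j0 (inC2rC hC) hn' hN' h1 hPh) opprK //.
have [X hX] := Xi_exists Lsym j0 hC hn hN.
have hXS : is_XiStar L n m (XiStar L n m).
  rewrite /XiStar (negbTE hn); apply: epsilon_spec.
  by exists (fun j i => X j (- i)); apply: (Xi_XiStar (X := X)) => // j i; rewrite opprK.
have hXi : is_Xi L m n (Xi L m n).
  by rewrite /Xi (negbTE hn'); apply: epsilon_spec; exists X.
have h1 := XiStar_Xi (X := fun j i => XiStar L n m j (- i)) (fun j i => erefl) hXS.
move=> j k; rewrite -(Xi_unique Lsym j0 hC hn hN h1 hXi) opprK //.
Qed.

Lemma LPS (n m : 'rV[int]_r) j k : inC2r n m -> normal L n m ->
  LPhiStar L j m n k = LPhi L j n m (- k).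
Proof.
move=> hC hN; have [hP _] := main_refl (inC2rC hC) (normal_sym hC hN).
rewrite /LPhiStar /LPhi /plo /phi_.
have e' : (m == - n) = (n == - m) by rewrite eq_negC.
rewrite e'; case: (n == - m).
  by rewrite (@LappR0 j _ _ (PhiStar L m n) (Phi L n m) k) ?oppr0 // => i; rewrite hP opprK.
by rewrite (@LappR0 j _ _ (PhiStar L m n) (Phi L n m) k) ?opprK // => i; rewrite hP opprK.
Qed.

Lemma inC2r_add (n m : 'rV[int]_r) k : inC2r n m -> inC2r (n + evec k) m.
Proof.
move=> h j; rewrite /ent /evec !mxE addrAC; apply: addr_ge0; first exact: h.
exact: ler0n.
Qed.

End S4.

Unset Implicit Arguments.
Unset Strict Implicit.

Theorem proposition10p1 (R : realType) (r : nat) (L : 'I_r -> int -> R[i]) :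
  (0 < r)%N ->
  (forall (j : 'I_r) (k : nat), L j (k%:Z) = L j (- (k%:Z))) ->
  forall n m : 'rV[int]_r, inC2r n m ->
  (normal L n m <-> normal L m n) /\
  (normal L n m ->
     (forall k : int, PhiStar L n m k = Phi L m n (- k)) /\
     (forall (j : 'I_r) (k : int), XiStar L n m j k = Xi L m n j (- k)) /\
     alpha L n m = beta L m n /\
     (forall j : 'I_r, inC2r (n - evec j) m -> normal L (n - evec j) m ->
        rho L n m j = sigma L m n j) /\
     (forall k l : 'I_r, k != l ->
        normal L (n + evec k) m -> normal L (n + evec l) m ->
        gammaR L k l n m = etaR L k l m n)).
Proof.
move=> hr hL n m hC.
have Lsym : forall j z, L j z = L j (- z).
  move=> j [k|k]; first exact: hL.
  by rewrite NegzE opprK; symmetry; exact: hL.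
pose j0 : 'I_r := Ordinal hr.
split.
  by split; [apply: (normal_sym Lsym j0 hC) | apply: (normal_sym Lsym j0 (inC2rC hC))].
move=> hN; have hN' := normal_sym Lsym j0 hC hN.
have [P1 X1] := main_refl Lsym j0 hC hN.
have [P2 _] := main_refl Lsym j0 (inC2rC hC) hN'.
split; first exact: P1.
split; first exact: X1.
split; first by rewrite /alpha /beta P2.
split.
  move=> j hC1 hN1; rewrite /rho /sigma (LPS Lsym j0 _ _ hC hN) (LPS Lsym j0 _ _ hC1 hN1) opprK.
  by rewrite (_ : - (- ent n j + 1) = ent n j - 1) //; lia.
move=> k l hkl hN1 hN2.
by rewrite /gammaR /etaR (LPS Lsym j0 _ _ (inC2r_add k hC) hN1) (LPS Lsym j0 _ _ hC hN) opprK.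
Qed.
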